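(* A framed arithmetic divisor is a triple $(L,\xi,\tau)$ where $L$ is a torsion-free abelian group of rank 1, $\xi:L\to\widehat{\mathbf{Z}}$ is a homomorphism generating the $\widehat{\mathbf{Z}}$-module $\operatorname{Hom}(L,\widehat{\mathbf{Z}})$, and $\tau:L\to\mathbf{R}$ is a group homomorphism. Two framed divisors $(L,\xi,\tau)$, $(L',\xi',\tau')$ are isomorphic if there is a group isomorphism $\phi:L\to L'$ with $\xi'\circ\phi=\xi$ and $\tau'\circ\phi=\tau$; let $\operatorname{Pic}_{Fr}(\overline{\operatorname{Spec}\mathbf{Z}})$ be the set of isomorphism classes. For an adele $a=(a_f,a_\infty)\in\mathbb{A}=\mathbb{A}_f\times\mathbf{R}$ of $\mathbf{Q}$ set $\mathcal F(a)=(L_a,\xi_a,\tau_a)$ with $L_a=\{q\in\mathbf{Q}\mid qa_f\in\widehat{\mathbf{Z}}\}$, $\xi_a(x)=xa_f$, $\tau_a(x)=xa_\infty$. Then $\mathcal F$ induces a canonical bijection between $Y_\mathbf{Q}=\mathbf{Q}^\times\backslash\mathbb{A}$ and $\operatorname{Pic}_{Fr}(\overline{\operatorname{Spec}\mathbf{Z}})$. *)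

(* Defs.v *)
From HB Require Import structures.
From mathcomp Require Import all_boot all_order all_algebra.
From mathcomp Require Import reals.
Set Implicit Arguments. Unset Strict Implicit. Unset Printing Implicit Defensive.
Import Order.TTheory GRing.Theory Num.Theory.
Local Open Scope ring_scope.

Definition modQ (m : nat) (x : rat) : rat :=
  x - m%:R * (Num.floor (x / m%:R))%:~R.

(* Finite adeles  A_f = lim_n  Q / nZ   (using A_f = Q + Zhat,
   Q \cap Zhat = Z, hence A_f / n Zhat = Q / nZ).
   An element is a function  a : nat -> rat  where  a n  is the
   representative in [0, n+1) of the class of the adele in Q/(n+1)Z,
   and the classes are compatible under the projections
   Q/(n+1)Z -> Q/(m+1)Z for (m+1) | (n+1).                              *)
Definition is_Af (a : nat -> rat) : Prop :=
  forall n, (0 <= a n) /\ (a n < n.+1%:R) /\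
    (forall m, (m.+1 %| n.+1)%N -> modQ m.+1 (a n) = a m).

Definition is_Zhat (a : nat -> rat) : Prop :=
  is_Af a /\ forall n, a n \is a Num.int.

Definition Af_add (a b : nat -> rat) : nat -> rat := fun n => modQ n.+1 (a n + b n).

(* multiplication of a finite adele by a rational number q = u/d :
   the component mod (n+1) of q*a is q * (component mod (n+1)d of a),
   reduced mod (n+1). *)
Definition Af_scale (q : rat) (a : nat -> rat) : nat -> rat :=
  fun n => modQ n.+1 (q * a ((n.+1 * `|denq q|)%N.-1)).

Definition Zhat_mul (c z : nat -> rat) : nat -> rat := fun n => modQ n.+1 (c n * z n).

Definition adele (R : realType) := ((nat -> rat) * R)%type.
Definition is_adele (R : realType) (a : adele R) : Prop := is_Af a.1.

Definition Q_act (R : realType) (q : rat) (a : adele R) : adele R :=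
  (Af_scale q a.1, ratr q * a.2).

Definition Qx_equiv (R : realType) (a b : adele R) : Prop :=
  exists q : rat, q != 0 /\ b = Q_act q a.

(* Framed divisor data: a group L, presented as a subset [fd_dom] of an
   ambient abelian group [fd_carrier] (for an abstract group take the
   whole carrier), together with xi : L -> Zhat and tau : L -> R. *)
Record fdata (R : realType) := FData {
  fd_carrier : zmodType;
  fd_dom : fd_carrier -> Prop;
  fd_xi : fd_carrier -> nat -> rat;
  fd_tau : fd_carrier -> R }.
Arguments fd_carrier {R} D : rename.
Arguments fd_dom {R} D _ : rename.
Arguments fd_xi {R} D _ _ : rename.
Arguments fd_tau {R} D _ : rename.

Definition is_subgroup (G : zmodType) (L : G -> Prop) : Prop :=
  L 0 /\ forall x y, L x -> L y -> L (x - y).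

Definition torsion_free (G : zmodType) (L : G -> Prop) : Prop :=
  forall x, L x -> forall n : nat, (0 < n)%N -> x *+ n = 0 -> x = 0.

Definition rank_one (G : zmodType) (L : G -> Prop) : Prop :=
  (exists x, L x /\ x != 0) /\
  forall x y, L x -> L y ->
    exists m n : int, ((m != 0) || (n != 0)) /\ x *~ m + y *~ n = 0.

Definition is_hom_Zhat (G : zmodType) (L : G -> Prop) (phi : G -> nat -> rat) : Prop :=
  (forall x, L x -> is_Zhat (phi x)) /\
  (forall x y, L x -> L y -> phi (x + y) = Af_add (phi x) (phi y)).

Definition is_hom_R (R : realType) (G : zmodType) (L : G -> Prop) (f : G -> R) : Prop :=
  forall x y, L x -> L y -> f (x + y) = f x + f y.

Definition framed (R : realType) (D : fdata R) : Prop :=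
  let L := fd_dom D in
  is_subgroup L /\ torsion_free L /\ rank_one L /\
  is_hom_Zhat L (fd_xi D) /\
  (forall phi, is_hom_Zhat L phi ->
     exists c, is_Zhat c /\ forall x, L x -> phi x = Zhat_mul c (fd_xi D x)) /\
  is_hom_R L (fd_tau D).

Definition fd_iso (R : realType) (D D' : fdata R) : Prop :=
  exists phi : fd_carrier D -> fd_carrier D',
    (forall x, fd_dom D x -> fd_dom D' (phi x)) /\
    (forall x y, fd_dom D x -> fd_dom D y -> phi (x + y) = phi x + phi y) /\
    (forall x y, fd_dom D x -> fd_dom D y -> phi x = phi y -> x = y) /\
    (forall y, fd_dom D' y -> exists x, fd_dom D x /\ phi x = y) /\
    (forall x, fd_dom D x -> fd_xi D' (phi x) = fd_xi D x) /\
    (forall x, fd_dom D x -> fd_tau D' (phi x) = fd_tau D x).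

Definition abstract_fd (R : realType) (L : zmodType) (xi : L -> nat -> rat) (tau : L -> R)
  : fdata R := @FData R L (fun _ => True) xi tau.

Definition F_adele (R : realType) (a : adele R) : fdata R :=
  @FData R rat (fun q => is_Zhat (Af_scale q a.1))
    (fun q => Af_scale q a.1) (fun q => ratr q * a.2).

(* Main.v *)
Require Import Defs.
From HB Require Import structures.
From mathcomp Require Import all_boot all_order all_algebra.
From mathcomp Require Import reals.
From mathcomp Require Import zify ring lra.
From Stdlib Require Import FunctionalExtensionality Classical IndefiniteDescription.
Import Order.TTheory GRing.Theory Num.Theory.

Set Implicit Arguments. Unset Strict Implicit. Unset Printing Implicit Defensive.

Definition ABok (A B : nat -> nat) : Prop :=
  [/\ forall m M, 0 < m -> m %| M -> 0 < M -> A M %% m = A m,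
      forall m M, 0 < m -> m %| M -> 0 < M -> B M %% m = B m,
      forall M, 0 < M -> B M < M &
      forall s, 0 < s -> A s = 0 -> B s = 0].

Definition Sol (A B : nat -> nat) M c : bool := (c < M) && ((c * A M) %% M == B M).

Lemma Sol_red A B m M c : ABok A B -> 0 < m -> m %| M -> 0 < M -> Sol A B M c -> Sol A B m (c %% m).
Proof.
move=> [hA hB hBl _] m0 hd M0 /andP[_ /eqP h].
rewrite /Sol ltn_pmod //=; apply/eqP.
by rewrite -(hA m M) // modnMm -(modn_dvdm _ hd) h hB.
Qed.

Lemma Sol_ne A B M : ABok A B -> 0 < M -> exists c, Sol A B M c.
Proof.
move=> hok M0; have [hA hB hBl hAB] := hok.
have [A0 | Apos] := posnP (A M).
  exists 0; rewrite /Sol M0 /= mul0n mod0n; apply/eqP/esym.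
  by apply: hAB => //.
set g := gcdn (A M) M.
have g0 : 0 < g by rewrite gcdn_gt0 M0 orbT.
have gM : g %| M by apply: dvdn_gcdr.
have gA : g %| A M by apply: dvdn_gcdl.
have Ag : A g = 0 by rewrite -(hA g M) // ; apply/eqP; rewrite -/(dvdn g (A M)).
have gB : g %| B M by apply/eqP; rewrite (hB g M) //; apply: hAB.
case: (egcdnP M Apos) => km kn e _.
exists ((km * (B M %/ g)) %% M); rewrite /Sol ltn_pmod //=; apply/eqP.
rewrite modnMml mulnAC e mulnDl mulnAC modnMDl -/g [g * _]mulnC divnK // modn_small //; exact: hBl.
Qed.

Definition good (A B : nat -> nat) m c : Prop :=
  c < m /\ forall M, 0 < M -> m %| M -> exists c', Sol A B M c' /\ c' %% m = c.

Lemma good0 A B : ABok A B -> good A B 1 0.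
Proof.
move=> hok; split=> // M M0 _; have [c hc] := Sol_ne hok M0.
by exists c; rewrite modn1.
Qed.

Lemma good_step A B m c M : ABok A B -> 0 < m -> m %| M -> 0 < M -> good A B m c ->
  exists c', good A B M c' /\ c' %% m = c.
Proof.
move=> hok m0 hd M0 [cm hg]; apply: NNPP => H.
have claim : forall K, exists N, [/\ 0 < N, M %| N & forall c', c' < K -> c' < M -> c' %% m = c ->
      forall c'', Sol A B N c'' -> c'' %% M <> c'].
  elim=> [|K [N1 [N10 hN1 IH]]]; first by exists M; split.
  have [[KM Km] | other] := classic (K < M /\ K %% m = c).
    have : ~ good A B M K by move=> gK; apply: H; exists K.
    move=> /not_and_or [//|]; move=> /not_all_ex_not [M' hM'].
    have [M'0 [dM' hM'']] : 0 < M' /\ M %| M' /\ forall c'', Sol A B M' c'' -> c'' %% M <> K.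
      apply: NNPP => hn; apply: hM' => M'0 dM'; apply: NNPP => hne; apply: hn; split=> //; split=> //.
      by move=> c'' hs e; apply: hne; exists c''.
    exists (N1 * M'); split; first by rewrite muln_gt0 N10.
      by apply: dvdn_mulr.
    have NM0 : 0 < N1 * M' by rewrite muln_gt0 N10.
    move=> c' hc' hcM hcm c'' hs.
    rewrite ltnS leq_eqVlt in hc'; case/orP: hc' => [/eqP -> | hc'].
      have := hM'' (c'' %% M') (Sol_red hok M'0 (dvdn_mull _ (dvdnn _)) NM0 hs).
      by rewrite (modn_dvdm _ dM').
    have := IH c' hc' hcM hcm (c'' %% N1) (Sol_red hok N10 (dvdn_mulr _ (dvdnn _)) NM0 hs).
    by rewrite (modn_dvdm _ hN1).
  exists N1; split=> // c' hc' hcM hcm c'' hs.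
  rewrite ltnS leq_eqVlt in hc'; case/orP: hc' => [/eqP e | hc']; last exact: IH.
  by exfalso; apply: other; rewrite -e.
have [N [N0 hN hc]] := claim M.
have [c'' [hs hcm']] := hg N N0 (dvdn_trans hd hN).
apply: (hc (c'' %% M) (ltn_pmod _ M0) (ltn_pmod _ M0) _ c'' hs) => //.
by rewrite (modn_dvdm _ hd).
Qed.

Lemma good_stepf A B k c : ABok A B -> good A B k`! c ->
  exists c', good A B k.+1`! c' /\ c' %% k`! = c.
Proof.
move=> hok; apply: good_step => //; first exact: fact_gt0.
  by rewrite factS dvdn_mull.
exact: fact_gt0.
Qed.

Fixpoint chain A B (hok : ABok A B) (k : nat) : {c : nat | good A B k`! c} :=
  match k with
  | 0 => exist _ 0 (good0 hok)
  | k'.+1 => let (c, hc) := chain hok k' in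
      let (c', hc') := constructive_indefinite_description _ (good_stepf hok hc) in
      exist _ c' (proj1 hc')
  end.

Lemma chain_rel A B (hok : ABok A B) k : sval (chain hok k.+1) %% k`! = sval (chain hok k).
Proof.
rewrite /=; case: (chain hok k) => c hc /=.
by case: constructive_indefinite_description => c' [h1 h2].
Qed.

Lemma fact_dvd j k : j <= k -> j`! %| k`!.
Proof.
move=> /subnK <-; elim: (k - j) => [|i IH]; first by rewrite add0n.
by rewrite addSn factS; apply: dvdn_mull.
Qed.

Lemma chain_lt A B (hok : ABok A B) k : sval (chain hok k) < k`!.
Proof. by case: (svalP (chain hok k)). Qed.

Lemma chain_rel' A B (hok : ABok A B) j k : j <= k -> sval (chain hok k) %% j`! = sval (chain hok j).
Proof.
move=> /subnK <-; elim: (k - j) => [|i IH]; first by rewrite add0n modn_small // chain_lt.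
rewrite addSn -IH -[in RHS](chain_rel hok (i + j)) (modn_dvdm _ (fact_dvd (leq_addl i j))) //.
Qed.

Lemma Konig A B : ABok A B -> exists C : nat -> nat,
  [/\ forall n, C n < n.+1,
      forall m n, m.+1 %| n.+1 -> C n %% m.+1 = C m &
      forall n, (C n * A n.+1) %% n.+1 = B n.+1].
Proof.
move=> hok; exists (fun n => sval (chain hok n.+1) %% n.+1); split.
- by move=> n; rewrite ltn_pmod.
- move=> m n hd /=.
  have mn : m <= n by have := dvdn_leq (ltn0Sn n) hd.
  rewrite (modn_dvdm _ hd).
  have h1 : m.+1 %| m.+1`! by rewrite factS dvdn_mulr.
  by rewrite -(modn_dvdm _ h1) chain_rel'.
- move=> n; set c := sval (chain hok n.+1).
  have hg := svalP (chain hok n.+1); rewrite -/c in hg.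
  have [_ hg2] := hg.
  have [c' [hs hc']] := hg2 (n.+1`!) (fact_gt0 _) (dvdnn _).
  have e : c' = c by rewrite -hc' modn_small //; case/andP: hs.
  rewrite e in hs.
  have h1 : n.+1 %| n.+1`! by rewrite factS dvdn_mulr.
  by have /andP[_ /eqP] := Sol_red hok (ltn0Sn n) h1 (fact_gt0 _) hs.
Qed.

Lemma find_pp_pow (DM : nat -> Prop) p k : DM 1 -> ~ DM (p ^ k) ->
  exists j, [/\ 0 < j, j <= k, DM (p ^ j.-1) & ~ DM (p ^ j)].
Proof.
move=> h1; elim: k => [|k IH] hk; first by rewrite expn0 in hk.
have [hd | hd] := classic (DM (p ^ k)).
  by exists k.+1; split.
have [j [j0 jk h2 h3]] := IH hd; exists j; split=> //; exact: leqW.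
Qed.

Lemma find_pp (DM : nat -> Prop) : DM 1 ->
  (forall s t, 0 < s -> DM s -> t %| s -> DM t) ->
  (forall a b, DM a -> DM b -> coprime a b -> DM (a * b)) ->
  forall d, 0 < d -> ~ DM d ->
  exists p j, [/\ prime p, 0 < j, p ^ j %| d, DM (p ^ j.-1) & ~ DM (p ^ j)].
Proof.
move=> h1 hdiv hcop.
suff H : forall N d, d <= N -> 0 < d -> ~ DM d ->
  exists p j, [/\ prime p, 0 < j, p ^ j %| d, DM (p ^ j.-1) & ~ DM (p ^ j)].
  by move=> d; exact: (H d d (leqnn d)).
elim=> [|N IH] d dN d0 hd.
  by move: d0; rewrite leqn0 in dN; rewrite (eqP dN).
have [d1 | d1] := leqP d 1.
  have e : d = 1 by apply/eqP; rewrite eqn_leq d1 d0.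
  by rewrite e in hd.
pose p := pdiv d.
have pp : prime p := pdiv_prime d1.
have hpart := partnC p d0.
have [hdp | hdp] := classic (DM (d`_p)).
  have hdp' : ~ DM (d`_p^').
    by move=> h; apply: hd; rewrite -hpart; apply: hcop => //; exact: coprime_partC.
  have gt1 : 1 < d`_p.
    rewrite p_part_gt1 mem_primes pp d0 /=; exact: pdiv_dvd.
  have lt : d`_p^' < d.
    rewrite -{2}hpart -{1}(mul1n (d`_p^')) ltn_pmul2r //; exact: part_gt0.
  have [q [j [qp j0 hqj h2 h3]]] := IH (d`_p^') (leq_trans (leq_trans lt dN) (leqnn _)) (part_gt0 _ _) hdp'.
  exists q, j; split=> //; apply: dvdn_trans hqj _; exact: dvdn_part.
have hk : ~ DM (p ^ logn p d) by rewrite -p_part.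
have [j [j0 jk h2 h3]] := find_pp_pow h1 hk.
exists p, j; split=> //; apply: dvdn_trans (dvdn_exp2l p jk) _; rewrite -p_part; exact: dvdn_part.
Qed.

Definition Eeps (p j N : nat) : nat := chinese (N`_p) (N`_p^') (p ^ j.-1) 0.

Lemma mod_split p x y m : 0 < m ->
  (x = y %[mod m`_p]) -> (x = y %[mod m`_p^']) -> x = y %[mod m].
Proof.
move=> m0 h1 h2; apply/eqP; rewrite -(partnC p m0) chinese_remainder ?coprime_partC //.
by rewrite h1 h2 !eqxx.
Qed.

Lemma Eeps_compat p j m M : 0 < m -> m %| M -> 0 < M ->
  Eeps p j M = Eeps p j m %[mod m].
Proof.
move=> m0 hd M0; apply: (mod_split (p := p) m0).
- rewrite -(modn_dvdm _ (partn_dvd p M0 hd)) /Eeps !chinese_modl ?coprime_partC //.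
  by rewrite (modn_dvdm _ (partn_dvd p M0 hd)).
- rewrite -(modn_dvdm _ (partn_dvd p^' M0 hd)) /Eeps !chinese_modr ?coprime_partC //.
  by rewrite (modn_dvdm _ (partn_dvd p^' M0 hd)) !mod0n.
Qed.

Lemma Eeps_van p j s : prime p -> 0 < s -> ~~ (p ^ j %| s) -> Eeps p j s %% s = 0.
Proof.
move=> pp s0 hn.
have : Eeps p j s = 0 %[mod s].
  apply: (mod_split (p := p) s0).
  - rewrite /Eeps chinese_modl ?coprime_partC // p_part.
    have hl : logn p s <= j.-1.
      rewrite pfactor_dvdn // -ltnNge in hn.
      by move: hn; case: j => //.
    by rewrite mod0n; apply/eqP; exact: (dvdn_exp2l p hl).
  - by rewrite /Eeps chinese_modr ?coprime_partC.
by rewrite mod0n.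
Qed.

Lemma Eeps_nz p j : prime p -> 0 < j -> Eeps p j (p ^ j) %% p ^ j != 0.
Proof.
move=> pp j0.
have hp : (p ^ j)`_p = p ^ j by rewrite p_part pfactorK.
have : Eeps p j (p ^ j) = p ^ j.-1 %[mod (p ^ j)`_p].
  exact: chinese_modl (coprime_partC p (p ^ j) (p ^ j)) (p ^ j.-1) 0.
rewrite hp.
move=> ->; rewrite modn_small; first by rewrite -lt0n expn_gt0 prime_gt0.
by rewrite ltn_exp2l ?prime_gt1 //; clear hp; case: j j0.
Qed.

Local Open Scope ring_scope.

Definition congQ (m x y : rat) : Prop := exists k : int, x = y + m * k%:~R.

Lemma congQ_refl m x : congQ m x x.
Proof. by exists 0; rewrite mulr0 addr0. Qed.
Lemma congQ_sym m x y : congQ m x y -> congQ m y x.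
Proof. by case=> k ->; exists (-k); rewrite intrN; ring. Qed.
Lemma congQ_trans m x y z : congQ m x y -> congQ m y z -> congQ m x z.
Proof. by case=> k -> [l ->]; exists (l + k); rewrite intrD; ring. Qed.
Lemma congQ_add m x y x' y' : congQ m x y -> congQ m x' y' -> congQ m (x + x') (y + y').
Proof. by case=> k -> [l ->]; exists (k + l); rewrite intrD; ring. Qed.
Lemma congQ_opp m x y : congQ m x y -> congQ m (- x) (- y).
Proof. by case=> k ->; exists (-k); rewrite intrN; ring. Qed.
Lemma congQ_mulz m x y (z : int) : congQ m x y -> congQ m (z%:~R * x) (z%:~R * y).
Proof. by case=> k ->; exists (z * k); rewrite intrM; ring. Qed.
Lemma congQ_scale m x y q : congQ m x y -> congQ (q * m) (q * x) (q * y).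
Proof. by case=> k ->; exists k; ring. Qed.
Lemma congQ_dvd m x y (j : int) : congQ (m * j%:~R) x y -> congQ m x y.
Proof. by case=> k ->; exists (j * k); rewrite intrM; ring. Qed.
Lemma congQ_int (m : int) x y : congQ m%:~R x y -> x \is a Num.int -> y \is a Num.int.
Proof.
case=> k -> /intrP [z Hz]; apply/intrP; exists (z - m * k).
by rewrite intrB intrM -Hz; ring.
Qed.

Lemma modQ_range (m : nat) x : (0 < m)%N -> 0 <= modQ m x < m%:R.
Proof.
move=> m0; rewrite /modQ.
have hm : 0 < (m%:R : rat) by rewrite ltr0n.
have /andP[h1 h2] := floor_itv (x / m%:R).
set f := Num.floor _ in h1 h2 *.
rewrite intrD in h2.
rewrite ler_pdivlMr // in h1; rewrite ltr_pdivrMr // in h2.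
apply/andP; split; [rewrite subr_ge0 mulrC // | rewrite ltrBlDr].
by rewrite mulrDl mul1r addrC mulrC in h2.
Qed.

Lemma modQ_cong (m : nat) x : congQ m%:R x (modQ m x).
Proof. by exists (Num.floor (x / m%:R)); rewrite /modQ; ring. Qed.

Lemma congQ_range_eq (m : nat) y y' : (0 < m)%N ->
  0 <= y < m%:R -> 0 <= y' < m%:R -> congQ m%:R y y' -> y = y'.
Proof.
move=> m0 /andP[h1 h2] /andP[h3 h4] [k hk].
have hm : 0 < (m%:R : rat) by rewrite ltr0n.
suff k0 : k = 0 by rewrite hk k0 mulr0 addr0.
have a1 : m%:R * k%:~R < (m%:R : rat) * 1%:~R by rewrite mulr1; lra.
have a2 : (m%:R : rat) * (-1)%:~R < m%:R * k%:~R by rewrite mulrN1; lra.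
rewrite ltr_pM2l // ltr_int in a1; rewrite ltr_pM2l // ltr_int in a2.
lia.
Qed.

Lemma modQ_uniq (m : nat) x y : (0 < m)%N -> 0 <= y < m%:R -> congQ m%:R x y -> modQ m x = y.
Proof.
move=> m0 hy hc; apply: (congQ_range_eq m0 (modQ_range _ m0) hy).
exact: congQ_trans (congQ_sym (modQ_cong m x)) hc.
Qed.

Lemma modQ_eq (m : nat) x y : (0 < m)%N -> congQ m%:R x y -> modQ m x = modQ m y.
Proof.
move=> m0 h; apply: modQ_uniq (modQ_range _ m0) _ => //.
exact: congQ_trans h (modQ_cong _ _).
Qed.

Lemma modQ_int (m : nat) x : x \is a Num.int -> modQ m x \is a Num.int.
Proof. move=> hx; rewrite /modQ; apply: rpredB => //; apply: rpredM; [exact: natr_int | exact: intr_int]. Qed.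

Lemma modQ_nat (m k : nat) : (0 < m)%N -> modQ m k%:R = (k %% m)%:R.
Proof.
move=> m0; apply: modQ_uniq => //.
  by rewrite ler0n ltr_nat ltn_pmod.
exists (k %/ m)%:Z; rewrite [in LHS](divn_eq k m) natrD natrM /=.
by rewrite pmulrn /=; ring.
Qed.
Lemma dq_nat (q : rat) : (`|denq q|%N%:R : rat) = (denq q)%:~R.
Proof. by rewrite natr_absz gtr0_norm // denq_gt0. Qed.

Lemma dq_pos (q : rat) : (0 < `|denq q|)%N.
Proof. by rewrite absz_gt0 denq_eq0. Qed.

Lemma congQ_dvdn (m M : nat) x y : (m %| M)%N -> congQ M%:R x y -> congQ m%:R x y.
Proof.
move=> /dvdnP [k ->]; rewrite natrM mulrC => h; apply: (congQ_dvd (j := k%:Z)) h.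
Qed.

Lemma Af_cong a m M : is_Af a -> (0 < m)%N -> (m %| M)%N -> (0 < M)%N ->
  congQ m%:R (a M.-1) (a m.-1).
Proof.
move=> ha; case: m => // m _; case: M => // M hd _ /=.
have [_ [_ h]] := ha M; rewrite -(h m hd); exact: modQ_cong.
Qed.

Lemma Af_range a n : is_Af a -> 0 <= a n < n.+1%:R.
Proof. by move=> ha; have [h1 [h2 _]] := ha n; rewrite h1 h2. Qed.

Lemma Af_scale_any q a n D : is_Af a -> (`|denq q| %| D)%N -> (0 < D)%N ->
  Af_scale q a n = modQ n.+1 (q * a (n.+1 * D).-1).
Proof.
move=> ha hd D0; rewrite /Af_scale; apply: modQ_eq => //.
have := Af_cong ha (m := (n.+1 * `|denq q|)%N) (M := (n.+1 * D)%N).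
rewrite muln_gt0 dq_pos dvdn_pmul2l // muln_gt0 D0 => /(_ isT hd isT).
move=> /(congQ_scale q) /congQ_sym; rewrite natrM dq_nat.
have -> : q * (n.+1%:R * (denq q)%:~R) = n.+1%:R * (numq q)%:~R by rewrite numqE; ring.
exact: congQ_dvd.
Qed.

Lemma Af_scale_Af q a : is_Af a -> is_Af (Af_scale q a).
Proof.
move=> ha n; split; last split.
- by have /andP[] := modQ_range (q * a (n.+1 * `|denq q|).-1) (ltn0Sn n).
- by have /andP[] := modQ_range (q * a (n.+1 * `|denq q|).-1) (ltn0Sn n).
move=> m hd; rewrite /Af_scale; apply: modQ_uniq => //.
  by have := modQ_range (q * a (m.+1 * `|denq q|).-1) (ltn0Sn m).
apply: congQ_trans (congQ_dvdn hd (congQ_sym (modQ_cong _ _))) _.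
apply: congQ_trans _ (modQ_cong _ _).
have := Af_cong ha (m := (m.+1 * `|denq q|)%N) (M := (n.+1 * `|denq q|)%N).
rewrite !muln_gt0 dq_pos dvdn_pmul2r ?dq_pos // => /(_ isT hd isT).
move=> /(congQ_scale q); rewrite natrM dq_nat.
have -> : q * (m.+1%:R * (denq q)%:~R) = m.+1%:R * (numq q)%:~R by rewrite numqE; ring.
exact: congQ_dvd.
Qed.
Lemma congQ_modQ_l (m : nat) x y : congQ m%:R x y -> congQ m%:R (modQ m x) y.
Proof. move=> h; exact: congQ_trans (congQ_sym (modQ_cong _ _)) h. Qed.
Lemma congQ_modQ_r (m : nat) x y : congQ m%:R x y -> congQ m%:R x (modQ m y).
Proof. move=> h; exact: congQ_trans h (modQ_cong _ _). Qed.

Lemma Af_scale_add q r a : is_Af a ->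
  Af_scale (q + r) a = Af_add (Af_scale q a) (Af_scale r a).
Proof.
move=> ha; apply: functional_extensionality => n.
set D := (`|denq q| * `|denq r| * `|denq (q + r)|)%N.
have D0 : (0 < D)%N by rewrite /D !muln_gt0 !dq_pos.
have hq : (`|denq q| %| D)%N by apply: dvdn_mulr; apply: dvdn_mulr.
have hr : (`|denq r| %| D)%N by apply: dvdn_mulr; apply: dvdn_mull.
have hqr : (`|denq (q + r)| %| D)%N by apply: dvdn_mull.
rewrite /Af_add (Af_scale_any n ha hqr D0) (Af_scale_any n ha hq D0) (Af_scale_any n ha hr D0).
apply: modQ_eq => //; rewrite mulrDl.
apply: congQ_add; apply: congQ_modQ_r; exact: congQ_refl.
Qed.

Lemma Af_scale_comp q r a : is_Af a ->
  Af_scale q (Af_scale r a) = Af_scale (q * r) a.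
Proof.
move=> ha; apply: functional_extensionality => n.
set D := (`|denq q| * `|denq r| * `|denq (q * r)|)%N.
have D0 : (0 < D)%N by rewrite /D !muln_gt0 !dq_pos.
rewrite (Af_scale_any n ha (D := D)) ?(dvdn_mull _ (dvdnn _)) //.
rewrite {1}/Af_scale.
set N := (n.+1 * `|denq q|)%N.
have N0 : (0 < N)%N by rewrite /N muln_gt0 dq_pos.
rewrite (Af_scale_any N.-1 ha (q := r) (D := (`|denq r| * `|denq (q * r)|)%N));
  last (by rewrite muln_gt0 !dq_pos); last by apply: dvdn_mulr.
rewrite prednK //.
have -> : (N * (`|denq r| * `|denq (q * r)|))%N = (n.+1 * D)%N by rewrite /N /D !mulnA.
apply: modQ_eq => //; rewrite -mulrA.
set A := r * _.
have := modQ_cong N A => /congQ_sym /(congQ_scale q).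
rewrite /N natrM dq_nat.
have -> : q * (n.+1%:R * (denq q)%:~R) = n.+1%:R * (numq q)%:~R by rewrite numqE; ring.
exact: congQ_dvd.
Qed.

Lemma Af_scale1 a : is_Af a -> Af_scale 1 a = a.
Proof.
move=> ha; apply: functional_extensionality => n.
rewrite /Af_scale /= muln1 /= mul1r; apply: modQ_uniq => //.
  exact: Af_range.
exact: congQ_refl.
Qed.

Lemma Af_scale0 a : Af_scale 0 a = (fun _ => 0).
Proof.
apply: functional_extensionality => n.
rewrite /Af_scale mul0r; apply: modQ_uniq => //; first by rewrite lexx ltr0n.
exact: congQ_refl.
Qed.

Lemma Zhat0 : is_Zhat (fun _ => 0).
Proof.
split=> // n; split; first by rewrite lexx.
split; first by rewrite ltr0n.
move=> m _; apply: modQ_uniq => //; [by rewrite lexx ltr0n | exact: congQ_refl].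
Qed.

Lemma Af_add_cancel u u' v : is_Af u -> is_Af u' ->
  Af_add u v = Af_add u' v -> u = u'.
Proof.
move=> hu hu' h; apply: functional_extensionality => n.
have := congr1 (fun f => f n) h; rewrite /Af_add => e.
apply: (congQ_range_eq (ltn0Sn n) (Af_range n hu) (Af_range n hu')).
have : congQ n.+1%:R (u n + v n) (u' n + v n).
  apply: congQ_trans (modQ_cong _ _) _; rewrite e; apply: congQ_sym; exact: modQ_cong.
move=> /(congQ_add (congQ_refl n.+1%:R (- v n))).
by rewrite !(addrC (- v n)) !addrK.
Qed.
Definition Zn (z : nat -> rat) (n : nat) : nat := `|Num.floor (z n)|%N.

Lemma ZnE z n : is_Zhat z -> z n = (Zn z n)%:R.
Proof.
move=> [ha hi]; have [h0 _] := ha n.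
rewrite /Zn natr_absz ger0_norm ?floor_ge0 //.
by apply/esym/eqP; rewrite -intrEfloor.
Qed.

Lemma Zn_lt z n : is_Zhat z -> (Zn z n < n.+1)%N.
Proof.
move=> hz; have [_ [h1 _]] := hz.1 n; rewrite (ZnE n hz) ltr_nat in h1; exact: h1.
Qed.

Lemma Zn_compat z m n : is_Zhat z -> (m.+1 %| n.+1)%N -> (Zn z n %% m.+1)%N = Zn z m.
Proof.
move=> hz hd; have [_ [_ h]] := hz.1 n; move: (h m hd).
rewrite (ZnE n hz) (ZnE m hz) modQ_nat // => /eqP; rewrite eqr_nat => /eqP //.
Qed.

Lemma Zn_compat' z m M : is_Zhat z -> (0 < m)%N -> (m %| M)%N -> (0 < M)%N ->
  (Zn z M.-1 %% m)%N = Zn z m.-1.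
Proof. by move=> hz; case: m => // m _; case: M => // M hd _; apply: Zn_compat. Qed.

Definition mkZ (E : nat -> nat) : nat -> rat := fun n => ((E n.+1) %% n.+1)%N%:R.

Lemma mkZ_Zhat E : (forall m M, (0 < m)%N -> (m %| M)%N -> (0 < M)%N -> (E M = E m %[mod m])%N) ->
  is_Zhat (mkZ E).
Proof.
move=> hE; split=> [n|n]; last exact: natr_int.
rewrite /mkZ ler0n ltr_nat ltn_pmod //; split=> //; split=> // m hd.
by rewrite modQ_nat // modn_dvdm // (hE m.+1 n.+1).
Qed.

Lemma modQ1_int y : modQ 1 y \is a Num.int -> y \is a Num.int.
Proof.
move=> h; have := congQ_sym (modQ_cong 1 y).
by move/(congQ_int (m := 1)) => /(_ h).
Qed.

Lemma Zhat_scale_int (k : int) z : is_Zhat z -> is_Zhat (Af_scale k%:~R z).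
Proof.
move=> hz; split; first exact: Af_scale_Af hz.1.
move=> n; rewrite /Af_scale; apply: modQ_int; apply: rpredM; first exact: intr_int.
exact: hz.2.
Qed.

Lemma Zhat_scale_iff q z : is_Zhat z ->
  (is_Zhat (Af_scale q z) <-> z (`|denq q|.-1) = 0).
Proof.
move=> hz; split.
- move=> [_ hi]; have := hi 0%N; rewrite /Af_scale mul1n => /modQ1_int.
  rewrite (ZnE _ hz); set K := Zn z _.
  have hK : (K < `|denq q|)%N by rewrite /K; have := Zn_lt (`|denq q|).-1 hz; rewrite prednK ?dq_pos.
  move=> /intrP [t ht].
  have e : (numq q * K%:Z = t * denq q)%R.
    apply: (@intr_inj rat); rewrite !intrM -ht numqE /=.
    have := denq_gt0 q; rewrite -(ltr0z rat) => hd; rewrite pmulrn /=.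
    by field.
  have : (`|denq q| %| `|numq q| * K)%N.
    by apply/dvdnP; exists `|t|%N; move: (congr1 absz e); rewrite !abszM /=.
  rewrite Gauss_dvdr; last by rewrite coprime_sym coprime_num_den.
  move=> hdK; have K0 : K = 0%N.
    by apply/eqP; move: hdK; apply: contraLR; rewrite -lt0n => hK0; rewrite gtnNdvd.
  by rewrite K0.
- move=> h0; split; first exact: Af_scale_Af hz.1.
  move=> n; rewrite /Af_scale; apply: modQ_int.
  have := Af_cong hz.1 (m := `|denq q|) (M := (n.+1 * `|denq q|)%N).
  rewrite dq_pos muln_gt0 dq_pos dvdn_mull // h0 => /(_ isT isT isT) [k ->].
  rewrite add0r dq_nat mulrA -numqE -intrM; exact: intr_int.
Qed.

Lemma Af_scale_intE (k : int) a n : Af_scale k%:~R a n = modQ n.+1 (k%:~R * a n).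
Proof. by rewrite /Af_scale denq_int /= muln1. Qed.

Lemma Af_add0l v : is_Af v -> Af_add (fun _ => 0) v = v.
Proof.
move=> hv; apply: functional_extensionality => n; rewrite /Af_add add0r.
apply: modQ_uniq => //; [exact: Af_range | exact: congQ_refl].
Qed.

Lemma Zhat_Af_add_int u v w : is_Af w -> w = Af_add u v ->
  (forall n, u n \is a Num.int) -> (forall n, v n \is a Num.int) -> is_Zhat w.
Proof. by move=> hw e hu hv; split=> // n; rewrite e /Af_add; apply: modQ_int; apply: rpredD. Qed.

Lemma natr_intr (k : nat) : (k%:R : rat) = (k%:Z)%:~R.
Proof. by []. Qed.

Lemma Bprime al be : is_Zhat al -> is_Zhat be ->
  (forall s, (0 < s)%N -> al s.-1 = 0 -> be s.-1 = 0) ->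
  exists c, is_Zhat c /\ be = Zhat_mul c al.
Proof.
move=> ha hb hab.
pose A M := Zn al M.-1; pose B M := Zn be M.-1.
have hok : ABok A B.
  split.
  - by move=> m M m0 hd M0; apply: Zn_compat'.
  - by move=> m M m0 hd M0; apply: Zn_compat'.
  - by move=> M M0; rewrite /B; have := Zn_lt M.-1 hb; rewrite prednK.
  - move=> s s0; rewrite /A /B => /eqP h0; apply/eqP.
    have : al s.-1 = 0 by rewrite (ZnE _ ha); move/eqP: h0 => ->.
    move=> /(hab s s0); rewrite (ZnE _ hb) => /eqP; by rewrite pnatr_eq0.
have [C [hC1 hC2 hC3]] := Konig hok.
exists (fun n => (C n)%:R); split.
  split=> [n|n]; last exact: natr_int.
  rewrite ler0n ltr_nat hC1; split=> //; split=> // m hd.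
  by rewrite modQ_nat // hC2.
apply: functional_extensionality => n.
rewrite /Zhat_mul (ZnE n ha) -natrM modQ_nat // hC3 /B /=.
exact: ZnE.
Qed.

Lemma Af_scale_Zmul q c z : is_Zhat c -> is_Zhat z -> is_Zhat (Af_scale q z) ->
  Af_scale q (Zhat_mul c z) = Zhat_mul c (Af_scale q z).
Proof.
move=> hc hz hqz; apply: functional_extensionality => n.
rewrite /Zhat_mul {1 2}/Af_scale.
set N := (n.+1 * `|denq q|)%N.
have N0 : (0 < N)%N by rewrite /N muln_gt0 dq_pos.
apply: modQ_eq => //.
have hw : q * z N.-1 \is a Num.int.
  have := hqz.2 n; rewrite /Af_scale -/N => hm.
  exact: (congQ_int (m := n.+1%:Z)) (congQ_sym (modQ_cong _ _)) hm.
have [w hw'] := intrP hw.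
have hcn : c n \is a Num.int := hc.2 n.
have [t ht] := intrP hcn.
apply: (congQ_trans (y := c N.-1 * (q * z N.-1))).
  have := modQ_cong N (c N.-1 * z N.-1) => /congQ_sym /(congQ_scale q).
  rewrite /N natrM dq_nat.
  have -> : q * (n.+1%:R * (denq q)%:~R) = n.+1%:R * (numq q)%:~R by rewrite numqE; ring.
  move=> /congQ_dvd; rewrite prednK ?muln_gt0 ?dq_pos // mulrCA; exact.
rewrite hw' ht.
have := Af_cong hc.1 (m := n.+1) (M := N) (ltn0Sn n) (dvdn_mulr _ (dvdnn _)) N0.
rewrite /= ht => /congQ_sym /(congQ_mulz w) h.
rewrite mulrC; apply: congQ_trans (congQ_sym h) _.
rewrite mulrC -hw'; apply: congQ_mulz; exact: modQ_cong.
Qed.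

Lemma sub_closed_add (G : zmodType) (L : G -> Prop) : is_subgroup L ->
  (forall x y, L x -> L y -> L (x + y)) /\ (forall x, L x -> L (- x)).
Proof.
move=> [h0 hs]; have hn : forall x, L x -> L (- x) by move=> x hx; rewrite -sub0r; apply: hs.
by split=> // x y hx hy; rewrite -[y]opprK; apply: hs => //; apply: hn.
Qed.

Lemma sub_closed_z (G : zmodType) (L : G -> Prop) : is_subgroup L ->
  forall x, L x -> forall k : int, L (x *~ k).
Proof.
move=> hL x hx; have [hadd hopp] := sub_closed_add hL.
have hnat : forall k : nat, L (x *+ k).
  elim=> [|k IH]; [exact: hL.1 | by rewrite mulrS; apply: hadd].
by case=> k; [exact: hnat | rewrite NegzE mulrNz; apply: hopp; exact: hnat].
Qed.

Lemma hom_zero (G : zmodType) (L : G -> Prop) phi : L 0 -> is_hom_Zhat L phi ->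
  phi 0 = (fun _ => 0).
Proof.
move=> h0 [hz ha]; have e := ha 0 0 h0 h0; rewrite addr0 in e.
apply: (@Af_add_cancel _ _ (phi 0)); [exact: (hz 0 h0).1 | exact: Zhat0.1 |].
by rewrite -e Af_add0l //; exact: (hz 0 h0).1.
Qed.

Lemma hom_zscale (G : zmodType) (L : G -> Prop) phi : is_subgroup L -> is_hom_Zhat L phi ->
  forall x, L x -> forall k : int, phi (x *~ k) = Af_scale k%:~R (phi x).
Proof.
move=> hL hphi x hx.
have [hadd hopp] := sub_closed_add hL.
have hz := sub_closed_z hL hx.
have hAf : is_Af (phi x) := (hphi.1 x hx).1.
have hnat : forall k : nat, phi (x *+ k) = Af_scale k%:R (phi x).
  elim=> [|k IH]; first by rewrite mulr0n (hom_zero hL.1 hphi) Af_scale0.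
  rewrite mulrS hphi.2 //; last exact: (hz k).
  by rewrite IH -{1}(Af_scale1 hAf) -Af_scale_add // -mulrS.
case=> k; first exact: hnat.
rewrite NegzE mulrNz.
have hy : L (x *+ k.+1) := hz k.+1.
apply: (@Af_add_cancel _ _ (phi (x *+ k.+1))).
- exact: (hphi.1 _ (hopp _ hy)).1.
- exact: Af_scale_Af.
rewrite -hphi.2 //; last exact: hopp.
rewrite addNr (hom_zero hL.1 hphi) hnat -Af_scale_add // intrN addNr.
by rewrite Af_scale0.
Qed.

Definition La (af : nat -> rat) (q : rat) : Prop := is_Zhat (Af_scale q af).

Lemma La_sub af : is_Af af -> is_subgroup (La af).
Proof.
move=> ha; split; first by rewrite /La Af_scale0; exact: Zhat0.
move=> x y hx hy; rewrite /La.
apply: (@Zhat_Af_add_int (Af_scale x af) (Af_scale (- y) af)).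
- exact: Af_scale_Af.
- exact: Af_scale_add.
- exact: hx.2.
- have -> : Af_scale (- y) af = Af_scale ((-1)%:~R) (Af_scale y af).
    by rewrite Af_scale_comp // mulN1r.
  exact: (Zhat_scale_int (-1) hy).2.
Qed.

Lemma Af_den_Zhat af : is_Af af -> La af (`|denq (af 0)|%:R).
Proof.
move=> ha; rewrite /La natr_intr; split; first exact: Af_scale_Af.
move=> n; rewrite Af_scale_intE; apply: modQ_int.
have [k ->] := Af_cong ha (m := 1) (M := n.+1) isT (dvd1n _) isT.
rewrite /= -natr_intr dq_nat mulrDr mulrC -numqE mul1r.
by apply: rpredD; [exact: intr_int | apply: rpredM; exact: intr_int].
Qed.

Lemma denq_invn (s : nat) : (0 < s)%N -> `|denq (s%:R^-1 : rat)|%N = s.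
Proof.
move=> s0; rewrite natr_intr denqVz; [by [] | lia].
Qed.

Lemma gen_F af phi : is_Af af -> is_hom_Zhat (La af) phi ->
  exists c, is_Zhat c /\ forall x, La af x -> phi x = Zhat_mul c (Af_scale x af).
Proof.
move=> ha hphi.
have hL := La_sub ha.
pose Dn := `|denq (af 0)|%N.
have Dn0 : (0 < Dn)%N := dq_pos (af 0).
pose D : rat := Dn%:R.
have D0 : D != 0 by rewrite /D pnatr_eq0 -lt0n.
have hD : La af D := Af_den_Zhat ha.
pose al := Af_scale D af.
pose be := phi D.
have hbe : is_Zhat be := hphi.1 D hD.
have hphix : forall x, La af x -> phi x = Af_scale (x / D) be.
  move=> x hx.
  pose k1 : int := (denq x * Dn%:Z)%R.
  pose k2 : int := numq x.
  have e : x *~ k1 = D *~ k2.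
    by rewrite -[x *~ k1]mulrzr -[D *~ k2]mulrzr /k1 /k2 intrM numqE /D natr_intr; ring.
  have e2 := congr1 phi e.
  rewrite (hom_zscale hL hphi hx) (hom_zscale hL hphi hD) in e2.
  have k10 : (k1%:~R : rat) != 0.
    by rewrite /k1 intrM mulf_neq0 // ?intr_eq0 ?denq_neq0 // -natr_intr.
  have hpx : is_Af (phi x) := (hphi.1 x hx).1.
  have := congr1 (Af_scale (k1%:~R^-1)) e2.
  rewrite !Af_scale_comp //; last exact: hbe.1.
  rewrite mulVf // Af_scale1 // => ->; congr Af_scale.
  rewrite /k1 /k2 intrM -natr_intr -/D.
  have dx : ((denq x)%:~R : rat) != 0 by rewrite intr_eq0 denq_neq0.
  rewrite -[x in RHS](divq_num_den x); field; by rewrite D0 dx.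
have hal : is_Zhat al by exact: hD.
have hab : forall s, (0 < s)%N -> al s.-1 = 0 -> be s.-1 = 0.
  move=> s s0 h0.
  have : is_Zhat (Af_scale (s%:R^-1) al) by apply/(Zhat_scale_iff _ hal); rewrite denq_invn.
  rewrite /al Af_scale_comp // => hx.
  have := hphi.1 _ hx; rewrite hphix //.
  have -> : s%:R^-1 * D / D = s%:R^-1 by rewrite mulfK.
  by move/(Zhat_scale_iff _ hbe); rewrite denq_invn.
have [c [hc e]] := Bprime hal hbe hab.
exists c; split=> // x hx.
have hxa : Af_scale (x / D) al = Af_scale x af by rewrite /al Af_scale_comp // divfK.
rewrite hphix // e Af_scale_Zmul // ?hxa //.
Qed.

Lemma rat_rank1 (x y : rat) : exists m n : int, ((m != 0) || (n != 0)) /\ x *~ m + y *~ n = 0.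
Proof.
have [-> | x0] := eqVneq x 0.
  by exists 1, 0; rewrite mul0rz mulr0z addr0.
exists (numq y * denq x)%R, (- (numq x * denq y))%R; split.
  apply/orP; right; rewrite oppr_eq0 mulf_neq0 // ?denq_neq0 //.
  by rewrite numq_eq0.
rewrite -[x *~ _]mulrzr -[y *~ _]mulrzr intrN !intrM !numqE; ring.
Qed.

Lemma framed_F (R : realType) (a : adele R) : is_adele a -> framed (F_adele a).
Proof.
move=> ha; rewrite /framed /=.
have hL : is_subgroup (La a.1) := La_sub ha.
split; first exact: hL.
split.
  move=> x _ n n0 /eqP; rewrite mulrn_eq0 => /orP [/eqP n00|/eqP //].
  by rewrite n00 in n0.
split.
  split; last by move=> x y _ _; exact: rat_rank1.
  exists (`|denq (a.1 0)|%:R); split; first exact: Af_den_Zhat.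
  by rewrite pnatr_eq0 -lt0n dq_pos.
split.
  by split=> // x y _ _; apply: Af_scale_add.
split.
  move=> phi hphi; exact: gen_F ha hphi.
by move=> x y _ _; rewrite rmorphD mulrDl.
Qed.

Lemma add_zscale (G H : zmodType) (L : G -> Prop) (f : G -> H) : is_subgroup L ->
  (forall x y, L x -> L y -> f (x + y) = f x + f y) ->
  forall x, L x -> forall k : int, f (x *~ k) = f x *~ k.
Proof.
move=> hL hf x hx.
have [hadd hopp] := sub_closed_add hL.
have hz := sub_closed_z hL hx.
have f0 : f 0 = 0.
  have := hf 0 0 hL.1 hL.1; rewrite addr0 => e.
  by apply: (addrI (f 0)); rewrite addr0 -e.
have hnat : forall k : nat, f (x *+ k) = f x *+ k.
  elim=> [|k IH]; first by rewrite !mulr0n.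
  by rewrite !mulrS hf ?IH //; exact: (hz k).
case=> k; first exact: hnat.
rewrite NegzE !mulrNz.
have hy : L (x *+ k.+1) := hz k.+1.
have := hf _ _ (hopp _ hy) hy; rewrite addNr f0 hnat => /eqP.
by rewrite eq_sym addr_eq0 => /eqP.
Qed.

Lemma iso_F (R : realType) (a b : adele R) : is_adele a -> is_adele b ->
  (Qx_equiv a b <-> fd_iso (F_adele a) (F_adele b)).
Proof.
move=> ha hb; split.
- move=> [q [q0 ->]]; rewrite /fd_iso /=.
  exists (fun x => x / q); split.
    by move=> x hx; rewrite Af_scale_comp // divfK.
  split; first by move=> x y _ _; rewrite mulrDl.
  split; first by move=> x y _ _ /(mulIf (invr_neq0 q0)).
  split.
    move=> y hy; exists (y * q); split; last by rewrite mulfK.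
    by move: hy; rewrite Af_scale_comp.
  split; first by move=> x _; rewrite Af_scale_comp // divfK.
  move=> x _; rewrite fmorph_div mulrA divfK //.
  by rewrite fmorph_eq0.
- move=> [phi [hdom [hadd [hinj [hsurj [hxi htau]]]]]].
  simpl in *.
  have hL : is_subgroup (La a.1) := La_sub ha.
  pose Dn := `|denq (a.1 0)|%N.
  pose D : rat := Dn%:R.
  have D0 : D != 0 by rewrite /D pnatr_eq0 -lt0n dq_pos.
  have hD : La a.1 D := Af_den_Zhat ha.
  have phi0 : phi 0 = 0.
    have := hadd 0 0 hL.1 hL.1; rewrite addr0 => e.
    by apply: (addrI (phi 0)); rewrite addr0 -e.
  have pD0 : phi D != 0.
    apply/eqP => e; have := hinj D 0 hD hL.1; rewrite e phi0 => /(_ erefl) hD0.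
    by rewrite hD0 eqxx in D0.
  pose r := phi D / D.
  have hlin : forall x, La a.1 x -> phi x = r * x.
    move=> x hx.
    pose k1 : int := (denq x * Dn%:Z)%R.
    pose k2 : int := numq x.
    have e : x *~ k1 = D *~ k2.
      by rewrite -[x *~ k1]mulrzr -[D *~ k2]mulrzr /k1 /k2 intrM numqE /D natr_intr; ring.
    have e2 := congr1 phi e.
    rewrite (add_zscale hL hadd hx) (add_zscale hL hadd hD) in e2.
    move: e2; rewrite -[phi x *~ k1]mulrzr -[phi D *~ k2]mulrzr /k1 /k2 intrM -natr_intr -/D numqE => e2.
    have dx : ((denq x)%:~R : rat) != 0 by rewrite intr_eq0 denq_neq0.
    rewrite /r; apply: (mulIf dx); apply: (mulIf D0); rewrite -mulrA e2; field; by rewrite D0.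
  have r0 : r != 0 by rewrite /r mulf_neq0 // invr_eq0.
  exists r^-1; split; first by rewrite invr_eq0.
  case: b hb hdom hadd hinj hsurj hxi htau => b1 b2 hb hdom hadd hinj hsurj hxi htau.
  rewrite /Q_act /=; congr pair.
    have := hxi D hD; rewrite hlin // => /(congr1 (Af_scale (r * D)^-1)).
    rewrite /= !Af_scale_comp // mulVf; last by rewrite mulf_neq0.
    rewrite Af_scale1 // => ->.
    congr Af_scale; field; by rewrite D0 r0.
  have e : (ratr (r * D) : R) * b2 = ratr D * a.2 by rewrite -hlin //; exact: htau D hD.
  have rD : r * D != 0 by rewrite mulf_neq0.
  have := congr1 (fun t => (ratr ((r * D)^-1) : R) * t) e.
  rewrite mulrA -rmorphM mulVf // rmorph1 mul1r => ->.
  rewrite mulrA -rmorphM; congr (ratr _ * _); field; by rewrite D0 r0.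
Qed.

Lemma La_sub_M (M : rat -> Prop) al : is_Zhat al -> M 1 ->
  (forall q q', M q -> M q' -> M (q + q')) ->
  (forall q (k : int), M q -> M (q * k%:~R)) ->
  (forall eps, is_Zhat eps -> (forall q, M q -> La eps q) ->
     exists c, is_Zhat c /\ eps = Zhat_mul c al) ->
  forall q, La al q -> M q.
Proof.
move=> hal h1 hadd hz hgen.
pose DM (s : nat) := M (s%:R^-1).
have hDen : forall q, M q -> DM `|denq q|%N.
  move=> q hq; rewrite /DM dq_nat.
  have : coprimez (numq q) (denq q) by rewrite coprimezE coprime_num_den.
  move=> /coprimezP [[u v] /= e].
  have -> : ((denq q)%:~R : rat)^-1 = q * u%:~R + 1 * v%:~R.
    have dq0 : ((denq q)%:~R : rat) != 0 by rewrite intr_eq0 denq_neq0.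
    have e' : (u%:~R * (numq q)%:~R + v%:~R * (denq q)%:~R : rat) = 1.
      by rewrite -!intrM -intrD e.
    rewrite mul1r -[q in RHS](divq_num_den q); apply: (mulIf dq0); rewrite mulVf //.
    apply: (etrans (esym e')); field; exact: dq0.
  by apply: hadd; apply: hz.
have DM1 : DM 1%N by rewrite /DM invr1.
have M0 : M 0 by rewrite -(mulr0 1) -(mulr0z 1); apply: hz.
have hdiv : forall s t, (0 < s)%N -> DM s -> (t %| s)%N -> DM t.
  move=> s t s0 hs ht.
  have t0 : (0 < t)%N := dvdn_gt0 s0 ht.
  rewrite /DM; have -> : (t%:R : rat)^-1 = s%:R^-1 * (s %/ t)%N%:Z%:~R.
    have e : s = (s %/ t * t)%N by rewrite divnK.
    have st0 : ((s %/ t)%N%:R : rat) != 0.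
      by rewrite pnatr_eq0 -lt0n divn_gt0 // dvdn_leq.
    by rewrite -natr_intr {1}e natrM invfM mulrAC mulVf ?mul1r.
  by apply: hz.
have hcop : forall a b, DM a -> DM b -> coprime a b -> DM (a * b)%N.
  move=> a b ha hb hab.
  have [a0 | a0] := eqVneq a 0%N; first by rewrite /DM a0 mul0n invr0.
  have [b0 | b0] := eqVneq b 0%N; first by rewrite /DM b0 muln0 invr0.
  have : coprimez a%:Z b%:Z by rewrite coprimezE.
  move=> /coprimezP [[u v] /= e].
  rewrite /DM; have -> : ((a * b)%N%:R : rat)^-1 = b%:R^-1 * u%:~R + a%:R^-1 * v%:~R.
    have a0' : (a%:R : rat) != 0 by rewrite pnatr_eq0.
    have b0' : (b%:R : rat) != 0 by rewrite pnatr_eq0.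
    have e' : (u%:~R * a%:R + v%:~R * b%:R : rat) = 1.
      by rewrite !natr_intr -!intrM -intrD e.
    rewrite natrM; apply: (mulIf (mulf_neq0 a0' b0')); rewrite mulVf ?mulf_neq0 //.
    apply: (etrans (esym e')); field; by rewrite a0' b0'.
  by apply: hadd; apply: hz.
move=> q hq.
have hal0 := (Zhat_scale_iff q hal).1 hq.
pose d := `|denq q|%N.
have d0 : (0 < d)%N := dq_pos q.
suff hd : DM d.
  have -> : q = d%:R^-1 * (numq q)%:~R.
    rewrite /d dq_nat -[q in LHS](divq_num_den q) mulrC //.
  by apply: hz.
apply: NNPP => hnd.
have [p [j [pp j0 hpj h2 h3]]] := find_pp DM1 hdiv hcop d0 hnd.
pose eps := mkZ (Eeps p j).
have heps : is_Zhat eps.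
  apply: mkZ_Zhat => m M' m0 hmd hM0; exact: Eeps_compat.
have hvan : forall q', M q' -> La eps q'.
  move=> q' hq'; apply/(Zhat_scale_iff q' heps).
  have hs := hDen q' hq'.
  pose s := `|denq q'|%N.
  have s0 : (0 < s)%N := dq_pos q'.
  rewrite /eps /mkZ prednK // Eeps_van //.
  apply/negP => hps; apply: h3; exact: hdiv s _ s0 hs hps.
have [c [hc e]] := hgen eps heps hvan.
pose n := (p ^ j).-1.
have pj0 : (0 < p ^ j)%N by rewrite expn_gt0 prime_gt0.
have hn : al n = 0.
  rewrite (ZnE n hal) /n -(Zn_compat' hal pj0 hpj d0).
  have : Zn al d.-1 = 0%N by apply/eqP; rewrite -(eqr_nat rat) -ZnE // hal0.
  by move=> ->; rewrite mod0n.
have := congr1 (fun f => f n) e; rewrite /Zhat_mul hn mulr0.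
rewrite (_ : modQ n.+1 0 = 0); last first.
  by apply: modQ_uniq => //; [rewrite lexx ltr0n | exact: congQ_refl].
rewrite /eps /mkZ /n prednK // => /eqP; rewrite pnatr_eq0.
by apply/negP; exact: Eeps_nz.
Qed.

Lemma cross_mul (u v u' v' : int) : v != 0 -> v' != 0 ->
  ((u%:~R / v%:~R : rat) = u'%:~R / v'%:~R) <-> (u * v' = u' * v)%R.
Proof.
move=> v0 v'0.
have vR : (v%:~R : rat) != 0 by rewrite intr_eq0.
have v'R : (v'%:~R : rat) != 0 by rewrite intr_eq0.
split.
- move=> e; apply: (@intr_inj rat); rewrite !intrM.
  have := congr1 (fun x => x * v%:~R * v'%:~R) e.
  by rewrite /= divfK // mulrAC divfK.
- move=> e; apply: (mulIf vR); apply: (mulIf v'R).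
  by rewrite divfK // mulrAC divfK // -!intrM e.
Qed.

Lemma tf_int (L : zmodType) : torsion_free (fun _ : L => True) ->
  forall (z : L) (k : int), k != 0 -> z *~ k = 0 -> z = 0.
Proof.
move=> htf z [n|n] hk.
- by move=> h; apply: (htf z I n) => //; rewrite lt0n; move: hk; apply: contra => /eqP ->.
- move=> /eqP; rewrite NegzE mulrNz oppr_eq0 => /eqP h.
  exact: (htf z I n.+1).
Qed.

Lemma surj_F (R : realType) (L : zmodType) (xi : L -> nat -> rat) (tau : L -> R) :
  framed (abstract_fd xi tau) ->
  exists a : adele R, is_adele a /\ fd_iso (F_adele a) (abstract_fd xi tau).
Proof.
rewrite /framed /= => [[hsub [htf [[[x0 [_ x00]] hr1] [hxi [hgen htau]]]]]].
have tfz := tf_int htf.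
pose rel (y : L) (r : rat) := exists u v : int, [/\ v != 0, r = u%:~R / v%:~R & y *~ v = x0 *~ u].
have rel_ex : forall y, exists r, rel y r.
  move=> y; have [m [n [hmn e]]] := hr1 x0 y I I.
  have n0 : n != 0.
    apply/negP => /eqP n0; rewrite n0 mulr0z addr0 in e.
    have m0 : m != 0 by move: hmn; rewrite n0 eqxx orbF.
    by move: x00; rewrite (tfz x0 m m0 e) eqxx.
  exists ((- m)%:~R / n%:~R), (- m), n; split=> //.
  by rewrite mulrNz; apply/eqP; rewrite -addr_eq0 addrC e.
have rel_uniq : forall y r r', rel y r -> rel y r' -> r = r'.
  move=> y r r' [u [v [v0 -> e]]] [u' [v' [v'0 -> e']]].
  apply/cross_mul => //; apply/eqP; rewrite -subr_eq0.
  case: (eqVneq (u * v' - u' * v) 0) => [// | hne].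
  move: x00; rewrite (tfz x0 _ hne) ?eqxx //.
  rewrite mulrzBr !mulrzA -e -e' -!mulrzA [v' * v]mulrC.
  by rewrite subrr.
have rel_inj : forall y y' r, rel y r -> rel y' r -> y = y'.
  move=> y y' r [u [v [v0 -> e]]] [u' [v' [v'0 e1 e']]].
  move/(cross_mul _ _ v0 v'0): e1 => e1.
  apply/eqP; rewrite -subr_eq0; apply/eqP; apply: tfz (mulf_neq0 v0 v'0) _.
  rewrite mulrzBl mulrzA e [v * v']mulrC mulrzA e' -!mulrzA e1 subrr //.
have rel_add : forall y y' r r', rel y r -> rel y' r' -> rel (y + y') (r + r').
  move=> y y' r r' [u [v [v0 -> e]]] [u' [v' [v'0 -> e']]].
  exists (u * v' + u' * v), (v * v'); split; first exact: mulf_neq0.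
    have vR : (v%:~R : rat) != 0 by rewrite intr_eq0.
    have v'R : (v'%:~R : rat) != 0 by rewrite intr_eq0.
    rewrite intrD !intrM; field; by rewrite vR v'R.
  by rewrite mulrzDl mulrzA e [v * v']mulrC mulrzA e' -!mulrzA mulrzDr.
have rel_z : forall y r (k : int), rel y r -> rel (y *~ k) (r * k%:~R).
  move=> y r k [u [v [v0 -> e]]]; exists (u * k), v; split=> //.
    by rewrite intrM mulrAC.
  by rewrite -mulrzA [k * v]mulrC [y *~ _]mulrzA e -mulrzA.
have rel_x0 : rel x0 1 by exists 1, 1; split=> //; rewrite divr1.
pose psi y := proj1_sig (constructive_indefinite_description _ (rel_ex y)).
have hpsi : forall y, rel y (psi y).
  move=> y; exact: (proj2_sig (constructive_indefinite_description _ (rel_ex y))).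
pose M q := exists y, rel y q.
have hxi_sub : is_subgroup (fun _ : L => True) by [].
pose al := xi x0.
have hal : is_Zhat al := hxi.1 x0 I.
have xiF : forall y r, rel y r -> xi y = Af_scale r al.
  move=> y r [u [v [v0 -> e]]].
  have e2 := congr1 xi e.
  rewrite (hom_zscale hxi_sub hxi) // (hom_zscale hxi_sub hxi) // in e2.
  have vR : (v%:~R : rat) != 0 by rewrite intr_eq0.
  have := congr1 (Af_scale (v%:~R^-1)) e2.
  rewrite !Af_scale_comp //; [|exact: hal.1|exact: (hxi.1 y I).1].
  rewrite mulVf // Af_scale1; last exact: (hxi.1 y I).1.
  move=> ->; congr Af_scale; exact: mulrC.
pose t := tau x0.
have tauF : forall y r, rel y r -> tau y = ratr r * t.
  move=> y r [u [v [v0 -> e]]].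
  have e2 := congr1 tau e.
  rewrite (add_zscale hxi_sub (fun x y _ _ => htau x y I I)) // in e2.
  rewrite (add_zscale hxi_sub (fun x y _ _ => htau x y I I)) // in e2.
  move: e2; rewrite -[tau y *~ v]mulrzr -[tau x0 *~ u]mulrzr => e2.
  have vR : (v%:~R : R) != 0 by rewrite intr_eq0.
  apply: (mulIf vR); rewrite e2 fmorph_div !rmorph_int /t.
  by field.
have hLM : forall q, La al q -> M q.
  apply: La_sub_M => //.
  - by exists x0.
  - by move=> q q' [y hy] [y' hy']; exists (y + y'); exact: rel_add.
  - by move=> q k [y hy]; exists (y *~ k); exact: rel_z.
  move=> eps heps hv.
  pose ph y := Af_scale (psi y) eps.
  have hph : is_hom_Zhat (fun _ : L => True) ph.
    split; first by move=> x _; apply: hv; exists x.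
    move=> x y _ _; rewrite /ph -Af_scale_add; last exact: heps.1.
    congr Af_scale; apply: (rel_uniq (x + y)) (hpsi (x + y)) _; apply: rel_add; exact: hpsi.
  have [c [hc hce]] := hgen ph hph.
  exists c; split=> //.
  have := hce x0 I; rewrite /ph (rel_uniq _ _ _ (hpsi x0) rel_x0) Af_scale1 //.
  exact: heps.1.
have ex_phi : forall q, exists y, M q -> rel y q.
  move=> q; have [[y hy] | hn] := classic (M q); first by exists y.
  by exists 0 => hm.
pose phi q := proj1_sig (constructive_indefinite_description _ (ex_phi q)).
have hphi : forall q, M q -> rel (phi q) q.
  move=> q; exact: (proj2_sig (constructive_indefinite_description _ (ex_phi q))).
exists (al, t); split; first exact: hal.1.
rewrite /fd_iso /=.
exists phi; split=> //.
have hLsub := La_sub hal.1.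
split.
  move=> x y hx hy.
  apply: (rel_inj _ _ (x + y)) (hphi _ (hLM _ _)) (rel_add _ _ _ _ (hphi _ (hLM _ hx)) (hphi _ (hLM _ hy))).
  exact: (sub_closed_add hLsub).1.
split.
  move=> x y hx hy e; apply: (rel_uniq (phi x)) (hphi _ (hLM _ hx)) _; rewrite e; exact: hphi _ (hLM _ hy).
split.
  move=> y _; exists (psi y); split.
    rewrite /La -(xiF _ _ (hpsi y)); exact: hxi.1.
  apply: (rel_inj _ _ (psi y)) (hphi _ _) (hpsi y); by exists y.
split.
  by move=> x hx; apply: xiF; apply: hphi; apply: hLM.
by move=> x hx; apply: tauF; apply: hphi; apply: hLM.
Qed.

Unset Implicit Arguments.

Theorem theorem8p5 (R : realType) :
  (* F lands in framed divisors *)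
  (forall a : adele R, is_adele a -> framed (F_adele a)) /\
  (* F is constant exactly on Q^x-orbits: well defined and injective on Y_Q *)
  (forall a b : adele R, is_adele a -> is_adele b ->
     (Qx_equiv a b <-> fd_iso (F_adele a) (F_adele b))) /\
  (* surjectivity onto isomorphism classes *)
  (forall (L : zmodType) (xi : L -> nat -> rat) (tau : L -> R),
     framed (abstract_fd xi tau) ->
     exists a : adele R, is_adele a /\ fd_iso (F_adele a) (abstract_fd xi tau)).
Proof.
split; first by move=> a ha; exact: framed_F.
split; first by move=> a b ha hb; exact: iso_F.
by move=> L xi tau h; exact: surj_F.
Qed.
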